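(* Let $p$ be a prime, and let $K=\{k_1<k_2<\cdots<k_r\}$ and $L=\{l_1,\ldots,l_s\}$ be disjoint subsets of $\{0,1,\ldots,p-1\}$. Let $\mathcal{A}=\{A_1,\ldots,A_m\}$ be a family of distinct subsets of $[n]$ with $|A_i|\pmod p\in K$ for all $i$ and $|A_i\cap A_j|\pmod p\in L$ for all $i\neq j$. Suppose $n\ge s+k_r$, and suppose that either $n<p+k_1$ or $(s-2r+1)+k_r<p+k_1-1$. Consider, as functions $\{0,1\}^n\to\mathbb{F}_p$, the polynomials \begin{itemize} \item $f_{A_j}(x)=\prod_{i=1}^{s}(v_{A_j}\cdot x-l_i)$ for $1\le j\le m$; \item $q_S(x)=(1-x_n)\prod_{i\in S}x_i$ for every $S\subseteq[n-1]$ with $|S|\le s-1$; \item $g_I(x)=g(x)\prod_{i\in I}x_i$ for every $I\subseteq[n-1]$ with $|I|\le s-2r$, where $g(x)=\prod_{h\in K\cup(K-1)}\big(x_1+\cdots+x_{n-1}-h\big)$ and $K-1=\{k-1:k\in K\}$. \end{itemize} Then these polynomials are linearly independent over $\mathbb{F}_p$. Consequently \[ |\mathcal{A}|\le \binom{n-1}{s}+\binom{n-1}{s-1}+\cdots+\binom{n-1}{s-2r+1}. \]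
   Context: $x=(x_1,\ldots,x_n)$ with each $x_i\in\{0,1\}$; for $A\subseteq[n]$, $v_A\in\{0,1\}^n$ is the incidence vector of $A$ ($i$-th coordinate $1$ iff $i\in A$), and $v_A\cdot x=\sum_{i\in A}x_i$. If $s-2r<0$ the third family is empty. Binomial coefficients with negative lower index are $0$. *)

(* Defs.v *)
From HB Require Import structures.
From mathcomp Require Import all_boot all_order all_algebra.
Unset Printing Implicit Defensive.
Import Order.TTheory GRing.Theory Num.Theory.
Local Open Scope ring_scope.

(* Points of {0,1}^n are x : 'I_n -> bool; coordinate i (0-based i : 'I_n,
   i.e. x_{i+1} in the paper's 1-based notation) viewed in F_p is (x i)%:R. *)

Definition v_dot (p n : nat) (A : {set 'I_n}) (x : 'I_n -> bool) : 'F_p :=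
  \sum_(i in A) (x i)%:R.

Definition f_fun (p n : nat) (L : seq nat) (A : {set 'I_n}) (x : 'I_n -> bool) : 'F_p :=
  \prod_(l <- L) (v_dot p n A x - l%:R).

(* the last coordinate x_n (paper, 1-based); the sum has exactly one term when n > 0 *)
Definition x_last (p n : nat) (x : 'I_n -> bool) : 'F_p :=
  \sum_(i < n | (i.+1 == n)%N) (x i)%:R.

Definition x_mon (p n : nat) (S : {set 'I_n}) (x : 'I_n -> bool) : 'F_p :=
  \prod_(i in S) (x i)%:R.

Definition sub_init (n : nat) (S : {set 'I_n}) : bool :=
  [forall i in S, (i.+1 < n)%N].

Definition q_fun (p n : nat) (S : {set 'I_n}) (x : 'I_n -> bool) : 'F_p :=
  (1 - x_last p n x) * x_mon p n S x.

Definition KuKm1 (K : seq nat) : seq int :=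
  undup ([seq (k%:Z) | k <- K] ++ [seq (k%:Z - 1)%R | k <- K]).

Definition g_fun (p n : nat) (K : seq nat) (x : 'I_n -> bool) : 'F_p :=
  \prod_(h <- KuKm1 K) ((\sum_(i < n | (i.+1 < n)%N) (x i)%:R) - h%:~R).

Definition gI_fun (p n : nat) (K : seq nat) (I : {set 'I_n}) (x : 'I_n -> bool) : 'F_p :=
  g_fun p n K x * x_mon p n I x.

(* Main.v *)
Require Import Defs.
From HB Require Import structures.
From mathcomp Require Import all_boot all_order all_algebra.
From mathcomp Require Import zify.
Import Order.TTheory GRing.Theory Num.Theory.
Local Open Scope ring_scope.

Local Open Scope ring_scope.

Section Fp.
Variable p : nat.
Hypothesis pp : prime p.

Lemma Fp_eq0 (w : nat) : (w%:R == 0 :> 'F_p) = (p %| w)%N.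
Proof. by rewrite (dvdn_pcharf (pchar_Fp pp)). Qed.

Lemma Fp_eqn (a b : nat) : (a%:R == b%:R :> 'F_p) = (a == b %[mod p])%N.
Proof.
wlog ab : a b / (a <= b)%N.
  move=> W; case/orP: (leq_total a b) => h; first exact: W.
  by rewrite eq_sym W // eq_sym.
by rewrite [RHS]eq_sym eqn_mod_dvd // -Fp_eq0 natrB // subr_eq0 eq_sym.
Qed.

Lemma Fp_int_neq0 (z : int) : (0 < z)%R -> (z < p%:Z)%R -> z%:~R != 0 :> 'F_p.
Proof.
move=> z0 zp; rewrite -(dvdz_pcharf (pchar_Fp pp)) dvdzE /=.
rewrite gtnNdvd //; lia.
Qed.
End Fp.

Definition pt {n} (B : {set 'I_n}) : 'I_n -> bool := fun i => i \in B.

Lemma sum_bool_card (T : finType) (A B : {set T}) :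
  (\sum_(i in A) ((i \in B) : nat))%N = #|A :&: B|.
Proof.
rewrite -big_mkcondr /= -sum1_card; apply: eq_bigl => i; by rewrite !inE.
Qed.

Lemma vdot_pt p n A B : v_dot p n A (pt B) = #|A :&: B|%:R.
Proof. by rewrite /v_dot /pt -sum_bool_card natr_sum. Qed.

Lemma xmon_pt p n S B : x_mon p n S (pt B) = (S \subset B)%:R.
Proof.
rewrite /x_mon /pt; case: (boolP (S \subset B)) => h.
  by rewrite big1 // => i iS; rewrite (subsetP h _ iS).
case/subsetPn: h => i iS niB.
by rewrite (bigD1 i) //= (negbTE niB) mul0r.
Qed.

Lemma xlast_pt p n B : x_last p n.+1 (pt B) = (ord_max \in B)%:R.
Proof.
rewrite /x_last (@big_pred1 _ _ _ _ ord_max) //.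
Qed.

Definition Dset n := [set i : 'I_n | (i.+1 < n)%N].

Lemma gsum_pt p n B : \sum_(i < n | (i.+1 < n)%N) ((pt B i) : nat)%:R = #|B :&: Dset n|%:R :> 'F_p.
Proof.
rewrite -natr_sum; congr (_%:R).
rewrite -sum1_card big_mkcond /= [RHS]big_mkcond /=; apply: eq_bigr => i _.
by rewrite /pt !inE andbC; case: (_ < _)%N; case: (i \in B).
Qed.

Local Open Scope ring_scope.

Section Vec.
Variables (F : fieldType) (vT : vectType F).

Lemma free_map_seq (I : eqType) (v : I -> vT) (s : seq I) : uniq s ->
  (forall a : I -> F, \sum_(i <- s) a i *: v i = 0 -> forall i, i \in s -> a i = 0) ->
  free (map v s).
Proof.
elim: s => [|x s IH] /=; first by rewrite nil_free.
case/andP=> xs us H.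
have Hs : free (map v s).
  apply: IH => // a Ha i iS.
  pose a' := fun j => if j == x then 0 else a j.
  have := H a' _ i; rewrite inE iS orbT /a' => /(_ _ isT).
  have -> : (i == x) = false by apply/negbTE; apply: contraNneq xs => <-.
  apply; rewrite big_cons eqxx scale0r add0r -[RHS]Ha.
  apply: eq_big_seq => j js.
  by have -> : (j == x) = false by apply/negbTE; apply: contraNneq xs => <-.
rewrite free_cons Hs andbT; apply/negP => vin.
have [k def _] := free_span Hs vin.
rewrite big_map in def.
pose a j := if j == x then -1 else k (v j).
suff : a x = 0 by rewrite /a eqxx => /eqP; rewrite oppr_eq0 oner_eq0.
apply: (H a _ x (mem_head _ _)); rewrite /a.
rewrite big_cons eqxx scaleN1r def.
have -> : \sum_(j <- s) (if j == x then -1 else k (v j)) *: v j = \sum_(j <- s) k (v j) *: v j.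
  apply: eq_big_seq => j js.
  by have -> : (j == x) = false by apply/negbTE; apply: contraNneq xs => <-.
by rewrite addNr.
Qed.

Lemma indep_card (I : finType) (P : pred I) (v : I -> vT) (U : {vspace vT}) :
  (forall i, P i -> v i \in U) ->
  (forall a : I -> F, \sum_(i | P i) a i *: v i = 0 -> forall i, P i -> a i = 0) ->
  (#|P| <= \dim U)%N.
Proof.
move=> vU H.
have fX : free (map v (enum P)).
  apply: free_map_seq; first exact: enum_uniq.
  move=> a Ha i; rewrite mem_enum; apply: H.
  by move: Ha; rewrite big_enum.
rewrite cardE -(size_map v) -(eqP fX); apply: dimvS.
apply/span_subvP => u /mapP[i]; rewrite mem_enum => Pi ->.
exact: vU.
Qed.
End Vec.

Local Open Scope ring_scope.

Section Deg.
Variables (F : fieldType) (n : nat).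
Notation X := {ffun 'I_n -> bool}.
Notation VT := {ffun X -> F^o}.

Definition mon (S : {set 'I_n}) : VT := [ffun x : X => \prod_(i in S) ((x i) : nat)%:R].
Definition Vd (d : nat) : {vspace VT} :=
  <<[seq mon A | A <- enum [pred A : {set 'I_n} | (#|A| <= d)%N]]>>%VS.
Definition fmul (u w : VT) : VT := [ffun x : X => u x * w x].

Lemma scaleFE (c : F) (u : VT) x : (c *: u) x = c * u x.
Proof. by rewrite ffunE. Qed.
End Deg.
Arguments mon F {n} S.
Arguments fmul {F n} u w.
Section Deg2.
Variables (F : fieldType) (n : nat).
Notation X := {ffun 'I_n -> bool}.
Notation VT := {ffun X -> F^o}.

Lemma mon_pt (S : {set 'I_n}) (x : X) : mon F S x = (S \subset [set i | x i])%:R.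
Proof.
rewrite ffunE; case: (boolP (S \subset _)) => h.
  by rewrite big1 // => i iS; move/subsetP: h => /(_ i iS); rewrite inE => ->.
case/subsetPn: h => i iS; rewrite inE => niB.
by rewrite (bigD1 i) //= (negbTE niB) mul0r.
Qed.

Lemma mon_mul (S T : {set 'I_n}) : fmul (mon F S) (mon F T) = mon F (S :|: T).
Proof.
apply/ffunP => x; rewrite ffunE !mon_pt subUset.
by case: (S \subset _); case: (T \subset _); rewrite ?mul1r ?mul0r.
Qed.

Lemma fmulC (u w : VT) : fmul u w = fmul w u.
Proof. by apply/ffunP => x; rewrite !ffunE mulrC. Qed.

Lemma fmul_sumL k (c : 'I_k -> F) (Y : 'I_k -> VT) w :
  fmul (\sum_i c i *: Y i) w = \sum_i c i *: fmul (Y i) w.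
Proof.
apply/ffunP => x; rewrite ffunE !sum_ffunE mulr_suml; apply: eq_bigr => i _.
by rewrite !ffunE scalerAl.
Qed.

Lemma mon_in (S : {set 'I_n}) d : (#|S| <= d)%N -> mon F S \in Vd F n d.
Proof. by move=> h; apply: memv_span; apply: map_f; rewrite mem_enum. Qed.

Lemma Vd_mono d e : (d <= e)%N -> (Vd F n d <= Vd F n e)%VS.
Proof.
move=> de; apply/span_subvP => u /mapP[S]; rewrite mem_enum /= => hS ->.
by apply: mon_in; apply: leq_trans de.
Qed.

Lemma Vd_dim d : (\dim (Vd F n d) <= #|[pred A : {set 'I_n} | (#|A| <= d)%N]|)%N.
Proof. by rewrite (leq_trans (dim_span _)) // size_map -cardE. Qed.

Lemma Vd_exp d u : u \in Vd F n d ->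
  exists k, exists c : 'I_k -> F, exists Y : 'I_k -> {set 'I_n},
   (forall i, #|Y i| <= d)%N /\ u = \sum_i c i *: mon F (Y i).
Proof.
rewrite /Vd; set Z := [seq _ | _ <- _] => uin.
have := @coord_span _ _ _ (in_tuple Z) u uin => ->.
exists (size Z), (fun i => coord (in_tuple Z) i u).
have hY : forall i : 'I_(size Z), exists S : {set 'I_n}, (#|S| <= d)%N && (Z`_i == mon F S).
  move=> i; have /mapP[S] := mem_nth 0 (ltn_ord i).
  by rewrite mem_enum => hS ->; exists S; rewrite eqxx andbT.
exists (fun i => xchoose (hY i)); split.
  by move=> i; case/andP: (xchooseP (hY i)).
apply: eq_bigr => i _; congr (_ *: _).
by case/andP: (xchooseP (hY i)) => _ /eqP.
Qed.

Lemma mul_in (a b : nat) (u w : VT) : u \in Vd F n a -> w \in Vd F n b -> fmul u w \in Vd F n (a + b).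
Proof.
move=> /Vd_exp[k [c [Y [hY ->]]]] /Vd_exp[k' [c' [Y' [hY' ->]]]].
rewrite fmul_sumL; apply: memv_suml => i _; apply: memvZ.
rewrite fmulC fmul_sumL; apply: memv_suml => j _; apply: memvZ.
rewrite mon_mul; apply: mon_in.
rewrite (leq_trans (leq_card_setU _ _)) // addnC leq_add //.
Qed.
End Deg2.
Section Deg3.
Variables (F : fieldType) (n : nat).
Notation X := {ffun 'I_n -> bool}.
Notation VT := {ffun X -> F^o}.

Lemma lin_in (P : pred 'I_n) (c d : F) :
  [ffun x : X => c * \sum_(i | P i) ((x i) : nat)%:R + d] \in Vd F n 1.
Proof.
have -> : [ffun x : X => c * \sum_(i | P i) ((x i) : nat)%:R + d] =
    \sum_(i | P i) c *: mon F [set i] + d *: mon F set0.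
  apply/ffunP => x; rewrite !ffunE sum_ffunE big_set0 mulr_sumr.
  congr (_ + _); last by rewrite /GRing.scale /= mulr1.
  by apply: eq_bigr => i _; rewrite !ffunE big_set1.
apply: memvD; last by apply: memvZ; apply: mon_in; rewrite cards0.
by apply: memv_suml => i _; apply: memvZ; apply: mon_in; rewrite cards1.
Qed.

Lemma prod_in (T : Type) (r : seq T) (G : T -> X -> F) :
  (forall t, [ffun x : X => G t x] \in Vd F n 1) ->
  [ffun x : X => \prod_(t <- r) G t x] \in Vd F n (size r).
Proof.
move=> HG; elim: r => [|t r IH].
  have -> : [ffun x : X => \prod_(t <- [::]) G t x] = mon F set0.
    by apply/ffunP => x; rewrite !ffunE big_nil big_set0.
  by apply: mon_in; rewrite cards0.
have -> : [ffun x : X => \prod_(t0 <- t :: r) G t0 x] =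
   fmul [ffun x : X => G t x] [ffun x : X => \prod_(t <- r) G t x].
  by apply/ffunP => x; rewrite !ffunE big_cons.
by have := @mul_in F n _ _ _ _ (HG t) IH; rewrite add1n.
Qed.
End Deg3.

Section W4.
Local Close Scope ring_scope.

Lemma count_le (T : finType) (X : {set T}) k :
  #|[pred S : {set T} | (S \subset X) && (#|S| < k)]| = \sum_(t < k) 'C(#|X|, t).
Proof.
elim: k => [|k IH].
  by rewrite big_ord0; apply: eq_card0 => S; rewrite inE ltn0 andbF.
rewrite big_ord_recr /= -IH -(cards_draws X k) -!sum1_card.
rewrite (bigID (fun S : {set T} => #|S| == k)) /= addnC; congr addn.
  apply: eq_bigl => S; rewrite !inE; case: (S \subset X) => //=.
  by rewrite ltnS; case: ltngtP.
apply: eq_big => [S|//]; rewrite !inE; case: (S \subset X) => //=.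
by rewrite ltnS; case: ltngtP.
Qed.

Lemma binsum_split m s :
  \sum_(t < s.+1) 'C(m.+1, t) = \sum_(t < s.+1) 'C(m, t) + \sum_(t < s) 'C(m, t).
Proof.
elim: s => [|s IH]; first by rewrite !big_ord_recr !big_ord0 /= !bin0.
rewrite big_ord_recr /= IH binS [in RHS]big_ord_recr /= [in RHS](big_ord_recr s) /=.
rewrite !(big_ord_recr s) /=; lia.
Qed.

Lemma sub_initE n (S : {set 'I_n}) : sub_init n S = (S \subset [set i : 'I_n | (i.+1 < n)%N]).
Proof.
apply/forall_inP/subsetP => H i; first by move=> /H; rewrite inE.
by move=> /H; rewrite inE.
Qed.

Lemma path_bounds x K : path ltn x K -> forall k, k \in x :: K -> (x <= k <= last x K)%N.
Proof.
elim: K x => [|y K IH] x /=; first by move=> _ k; rewrite inE => /eqP ->; rewrite leqnn.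
case/andP => xy pK k; rewrite inE => /orP[/eqP ->|kin].
  have /andP[_ h] := IH y pK y (mem_head _ _).
  by rewrite leqnn /= (leq_trans (ltnW xy) h).
have /andP[h1 h2] := IH y pK k kin.
by rewrite h2 andbT (leq_trans (ltnW xy) h1).
Qed.

Lemma sorted_bounds K k : sorted ltn K -> k \in K -> (head 0 K <= k <= last 0 K)%N.
Proof. by case: K => [|x K] //= pK kin; apply: path_bounds. Qed.

End W4.

Local Open Scope ring_scope.

Lemma sub_sum0 (F : zmodType) (T : finType) (U : {set T}) (phi : {set T} -> F) :
  (forall J : {set T}, J \subset U -> \sum_(J' : {set T} | J' \subset J) phi J' = 0) ->
  forall J : {set T}, J \subset U -> phi J = 0.
Proof.
move=> H J; have [k] := ubnP #|J|; elim: k J => // k IH J hJ JU.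
have := H J JU; rewrite (bigD1 J) //= big1 ?addr0 // => J' /andP[J'J neq].
apply: IH; last exact: subset_trans J'J JU.
have : J' \proper J by rewrite properEneq neq.
by move/proper_card => h; apply: leq_trans h _.
Qed.

Local Open Scope ring_scope.

Section Main.
Variables (p n m : nat) (K L : seq nat) (A : 'I_m -> {set 'I_n.+1}).
Hypothesis pp : prime p.
Hypothesis Ksort : sorted ltn K.
Hypothesis Kp : all (fun k => k < p)%N K.
Hypothesis Lp : all (fun l => l < p)%N L.
Hypothesis KL : ~~ has (fun l => l \in K) L.

Definition gam (w : nat) : 'F_p := \prod_(h <- KuKm1 K) (w%:R - h%:~R).

Lemma L_f0 (w : nat) : (w %% p)%N \in L -> \prod_(l <- L) (w%:R - l%:R : 'F_p) = 0.
Proof.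
move=> wL; apply/eqP; rewrite prodf_seq_eq0; apply/hasP; exists (w %% p)%N => //=.
by rewrite Fp_nat_mod // subrr.
Qed.

Lemma L_f1 (w : nat) : (w %% p)%N \in K -> \prod_(l <- L) (w%:R - l%:R : 'F_p) != 0.
Proof.
move=> wK; rewrite prodf_seq_neq0; apply/allP => l lL /=.
rewrite subr_eq0 Fp_eqn //; apply/negP => /eqP E.
have lp : (l < p)%N by move/allP: Lp => /(_ l lL).
rewrite (modn_small lp) in E.
by move/hasPn: KL => /(_ l lL); rewrite -E wK.
Qed.

Lemma L_g0 (w : nat) : ((w %% p)%N \in K) || ((w.+1 %% p)%N \in K) -> gam w = 0.
Proof.
move=> H; apply/eqP; rewrite /gam prodf_seq_eq0; apply/hasP.
case/orP: H => H.
  exists ((w %% p)%N%:Z).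
    by rewrite /KuKm1 mem_undup mem_cat; apply/orP; left; apply: map_f.
  have -> : (((w %% p)%N%:Z)%:~R : 'F_p) = (w %% p)%:R by [].
  by rewrite /= (Fp_nat_mod pp) subrr.
exists ((w.+1 %% p)%N%:Z - 1).
  by rewrite /KuKm1 mem_undup mem_cat; apply/orP; right; apply: (map_f (fun k : nat => k%:Z - 1) H).
have E : forall k : nat, ((k%:Z)%:~R : 'F_p) = k%:R by [].
by rewrite /= intrB !E (Fp_nat_mod pp) -addn1 natrD addrK subrr.
Qed.

Lemma L_g1 (w : nat) :
  (forall h, h \in KuKm1 K -> (0 < w%:Z - h) && (w%:Z - h < p%:Z)) -> gam w != 0.
Proof.
move=> H; rewrite /gam prodf_seq_neq0; apply/allP => h hK /=.
have /andP[h1 h2] := H h hK.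
by have := @Fp_int_neq0 p pp _ h1 h2; rewrite intrB.
Qed.


Notation N := n.+1.
Notation D := (Dset N).
Notation lastI := (@ord_max n).

Lemma ev_f (X B : {set 'I_N}) :
  f_fun p N L X (pt B) = \prod_(l <- L) (#|X :&: B|%:R - l%:R).
Proof. by rewrite /f_fun; apply: eq_bigr => l _; rewrite vdot_pt. Qed.

Lemma ev_q (S B : {set 'I_N}) :
  q_fun p N S (pt B) = (1 - (lastI \in B)%:R) * (S \subset B)%:R.
Proof. by rewrite /q_fun xlast_pt xmon_pt. Qed.

Lemma ev_g (I B : {set 'I_N}) :
  gI_fun p N K I (pt B) = gam #|B :&: D| * (I \subset B)%:R.
Proof.
rewrite /gI_fun /g_fun xmon_pt; congr (_ * _); apply: eq_bigr => h _.
by rewrite gsum_pt.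
Qed.

Lemma lastD : lastI \notin D.
Proof. by rewrite inE ltnn. Qed.

Lemma memD (i : 'I_N) : (i \in D) = (i != lastI).
Proof. rewrite inE -val_eqE /=; have := ltn_ord i; lia. Qed.

Lemma cardD : #|D| = n.
Proof.
have -> : D = [set~ lastI] by apply/setP => i; rewrite memD !inE.
by rewrite cardsC1 card_ord.
Qed.

Lemma capD (X : {set 'I_N}) : (X :|: [set lastI]) :&: D = X :&: D.
Proof. apply/setP => i; rewrite !in_setI memD !inE; by case: (i == lastI); rewrite ?andbF ?orbF. Qed.


Hypothesis HK : forall i, (#|A i| %% p)%N \in K.
Hypothesis HL : forall i j, i != j -> (#|A i :&: A j| %% p)%N \in L.

Definition validS (S : {set 'I_N}) := sub_init N S && (#|S|.+1 <= size L)%N.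
Definition validI (I : {set 'I_N}) := sub_init N I && (#|I| + 2 * size K <= size L)%N.

Definition Sum3 (a : 'I_m -> 'F_p) (b c : {set 'I_N} -> 'F_p) (x : 'I_N -> bool) :=
  \sum_(j < m) a j * f_fun p N L (A j) x
    + \sum_(S : {set 'I_N} | sub_init N S && (#|S|.+1 <= size L)%N) b S * q_fun p N S x
    + \sum_(I : {set 'I_N} | sub_init N I && (#|I| + 2 * size K <= size L)%N)
          c I * gI_fun p N K I x.

Lemma cardDl (X : {set 'I_N}) : #|X| = ((lastI \in X) + #|X :&: D|)%N.
Proof.
rewrite (cardsD1 lastI X); congr (_ + _)%N.
by apply: eq_card => i; rewrite in_setD1 in_setI memD andbC.
Qed.

Lemma step_a a b c : (forall B, Sum3 a b c (pt B) = 0) ->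
  forall i, (forall j, j != i -> a j = 0 \/ A j :&: (A i :|: [set lastI]) = A j :&: A i) ->
  a i = 0.
Proof.
move=> Hx i Hj; set B := A i :|: [set lastI]; have := Hx B; rewrite /Sum3.
have -> : \sum_(S : {set 'I_N} | sub_init N S && (#|S|.+1 <= size L)%N) b S * q_fun p N S (pt B) = 0.
  apply: big1 => S _; rewrite ev_q /B in_setU in_set1 eqxx orbT subrr mul0r mulr0 //.
have -> : \sum_(I : {set 'I_N} | sub_init N I && (#|I| + 2 * size K <= size L)%N)
          c I * gI_fun p N K I (pt B) = 0.
  apply: big1 => I _; rewrite ev_g /B capD L_g0 ?mul0r ?mulr0 //.
  have := HK i; rewrite (cardDl (A i)).
  by case: (lastI \in A i) => /= ->; rewrite ?orbT.
rewrite !addr0 (bigD1 i) //= big1 ?addr0.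
  move/eqP; rewrite mulf_eq0 => /orP[/eqP //|].
  rewrite ev_f; have -> : A i :&: B = A i by apply/setIidPl; rewrite subsetUl.
  by rewrite (negbTE (@L_f1 _ (HK i))).
move=> j ji; case: (Hj j ji) => [->|E]; first by rewrite mul0r.
by rewrite ev_f E L_f0 ?mulr0 // HL.
Qed.

Lemma all_a a b c : (forall B, Sum3 a b c (pt B) = 0) -> forall i, a i = 0.
Proof.
move=> Hx.
have HA : forall i, lastI \in A i -> a i = 0.
  move=> i li; apply: (@step_a a b c Hx) => j _; right.
  apply/setP => y; rewrite !inE; case: (y =P lastI) => [->|]; last by rewrite orbF.
  by rewrite li orbT.
move=> i; case: (boolP (lastI \in A i)) => [|li]; first exact: HA.
apply: (@step_a a b c Hx) => j _; case: (boolP (lastI \in A j)) => lj; first by left; exact: HA.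
right; apply/setP => y; rewrite !inE; case: (y =P lastI) => [->|]; last by rewrite orbF.
by rewrite (negbTE lj).
Qed.


Lemma exists_sub_card (T : finType) (Y : {set T}) t :
  (t <= #|Y|)%N -> exists Z : {set T}, Z \subset Y /\ #|Z| = t.
Proof.
elim: t => [|t IH] h; first by exists set0; rewrite sub0set cards0.
have [Z [ZY cZ]] := IH (ltnW h).
have : (0 < #|Y :\: Z|)%N by rewrite cardsD (setIidPr ZY) cZ subn_gt0.
case/card_gt0P => y; rewrite in_setD => /andP[yZ yY].
exists (y |: Z); split; first by rewrite subUset sub1set yY ZY.
by rewrite cardsU1 yZ cZ.
Qed.

Lemma card_disj (T : finType) (J Z : {set T}) : J :&: Z = set0 -> #|J :|: Z| = (#|J| + #|Z|)%N.
Proof. by move=> h; rewrite -cardsUI h cards0 addn0. Qed.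

Lemma subU_last (I J : {set 'I_N}) : I \subset D -> (I \subset J :|: [set lastI]) = (I \subset J).
Proof.
move=> ID; apply/subsetP/subsetP => H y yI.
  have := H y yI; rewrite in_setU in_set1; case: (y =P lastI) => [E|_]; last by rewrite orbF.
  by move: (subsetP ID y yI); rewrite E (negbTE lastD).
by rewrite in_setU (H y yI).
Qed.

Hypothesis Hn : (size L + last 0%N K <= N)%N.
Hypothesis Hc : ((N < p + head 0%N K)%N \/ ((size L)%:Z + 1 - 2 * (size K)%:Z + (last 0%N K)%:Z
                               < (p + head 0%N K)%:Z - 1)%R).

Definition tK := if K is [::] then 0%N else (last 0%N K).+1.

Lemma t_ok (I0 : {set 'I_N}) : validI I0 ->
  (tK + #|I0| <= n)%N /\ (forall w, (tK <= w <= tK + #|I0|)%N -> gam w != 0).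
Proof.
rewrite /validI sub_initE => /andP[I0D hI0].
have cI0 : (#|I0| <= n)%N by rewrite (leq_trans (subset_leq_card I0D)) // cardD.
move: Hn Hc hI0; rewrite /tK /gam.
case E: K => [|k0 K'] Hn' Hc' hI0.
  by split => // w _; rewrite /KuKm1 /= big_nil oner_neq0.
have bnd : forall k, k \in K -> (head 0 K <= k <= last 0 K)%N.
  by move=> k; apply: sorted_bounds.
rewrite E in bnd.
set lK := last 0%N (k0 :: K') in Hn' Hc' bnd *.
set hK := head 0%N (k0 :: K') in Hc' bnd.
have sz : (0 < size (k0 :: K'))%N by [].
set r := size (k0 :: K') in hI0 Hc' sz.
have t1 : (lK.+1 + #|I0| <= n)%N by lia.
split => // w /andP[w1 w2]; idtac.
have := @L_g1 w; rewrite /gam E; apply => h.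
rewrite /KuKm1 mem_undup mem_cat => /orP[] /mapP[k kK ->];
  have /andP[b1 b2] := bnd k kK; apply/andP; split; lia.
Qed.

Lemma all_c a b c : (forall B, Sum3 a b c (pt B) = 0) -> forall I, validI I -> c I = 0.
Proof.
move=> Hx; have Ha := @all_a a b c Hx.
have H1 : forall J : {set 'I_N}, J \subset D -> gam #|J| * \sum_(I | validI I && (I \subset J)) c I = 0.
  move=> J JD; have := Hx (J :|: [set lastI]); rewrite /Sum3 big1 ?add0r; last first.
    by move=> j _; rewrite Ha mul0r.
  rewrite big1 ?add0r; last first.
    by move=> S _; rewrite ev_q in_setU in_set1 eqxx orbT subrr mul0r mulr0.
  move=> E; rewrite -[RHS]E mulr_sumr big_mkcondr /=; apply: eq_bigr => I.
  rewrite /validI sub_initE => /andP[ID _].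
  rewrite ev_g capD (setIidPl JD) subU_last //.
  by case: (I \subset J); rewrite ?mulr1 ?mulr0 // mulrC.
suff H : forall k I, validI I -> (size L - #|I| < k)%N -> c I = 0.
  by move=> I vI; apply: (H (size L).+1) => //; lia.
elim=> [|k IH] I0 v0 hk; first by rewrite ltn0 in hk.
have [tn gnz] := @t_ok I0 v0.
have I0D : I0 \subset D by move: v0; rewrite /validI sub_initE => /andP[].
have [Z [ZD cZ]] : exists Z : {set 'I_N}, Z \subset D :\: I0 /\ #|Z| = tK.
  apply: exists_sub_card; rewrite cardsD (setIidPr I0D) cardD; lia.
have ZI0 : forall J : {set 'I_N}, J \subset I0 -> J :&: Z = set0.
  move=> J JI0; apply/setP => y; rewrite !inE; apply/negP => /andP[yJ yZ].
  by move: (subsetP ZD y yZ); rewrite in_setD (subsetP JI0 y yJ).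
pose phi (J : {set 'I_N}) := \sum_(I | validI I && (I :\: Z == J)) c I.
have Hphi : forall J : {set 'I_N}, J \subset I0 -> \sum_(J' : {set 'I_N} | J' \subset J) phi J' = 0.
  move=> J JI0.
  have JZD : J :|: Z \subset D.
    rewrite subUset (subset_trans JI0 I0D) /=.
    by apply: subset_trans ZD _; apply: subsetDl.
  have cJZ : #|J :|: Z| = (#|J| + tK)%N by rewrite card_disj ?ZI0 // cZ.
  have cJ : (#|J| <= #|I0|)%N by apply: subset_leq_card.
  have := H1 _ JZD; rewrite cJZ => /eqP; rewrite mulf_eq0 (negbTE (gnz _ _)) /=; last first.
    by rewrite leq_addl /= addnC leq_add2l.
  move=> /eqP E; rewrite -[RHS]E /phi.
  rewrite [RHS](partition_big (fun I : {set 'I_N} => I :\: Z) (fun J' : {set 'I_N} => J' \subset J)) /=; last first.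
    by move=> I /andP[_ h]; rewrite subDset setUC.
  apply: eq_bigr => J' J'J; apply: eq_bigl => I.
  case: (I :\: Z =P J') => [E'|]; rewrite ?andbF ?andbT //.
  by rewrite setUC -subDset E' J'J andbT.
have := @sub_sum0 _ _ I0 phi Hphi I0 (subxx I0).
have I0Z : I0 :\: Z = I0.
  by apply/setP => y; rewrite in_setD; case yI0: (y \in I0); rewrite ?andbF // andbT;
    apply/negP => yZ; move: (subsetP ZD y yZ); rewrite in_setD yI0.
rewrite /phi (bigD1 I0) /=; last by rewrite v0 I0Z eqxx.
rewrite big1 ?addr0 // => I /andP[/andP[vI /eqP IZ] neq].
apply: (IH I vI).
have : I0 \proper I.
  by rewrite properEneq eq_sym neq -IZ subsetDl.
move/proper_card; move: vI hk; rewrite /validI => /andP[_]; lia.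
Qed.


Lemma all_b a b c : (forall B, Sum3 a b c (pt B) = 0) -> forall S, validS S -> b S = 0.
Proof.
move=> Hx; have Ha := @all_a a b c Hx; have Hcc := @all_c a b c Hx.
pose phi (S : {set 'I_N}) := if validS S then b S else 0.
have Hphi : forall J : {set 'I_N}, J \subset D -> \sum_(J' : {set 'I_N} | J' \subset J) phi J' = 0.
  move=> J JD; have := Hx J; rewrite /Sum3 big1 ?add0r; last first.
    by move=> j _; rewrite Ha mul0r.
  rewrite [X in _ + X]big1 ?addr0; last by move=> I vI; rewrite Hcc // mul0r.
  move=> E; rewrite -[RHS]E /phi -big_mkcondr /=.
  rewrite [RHS](bigID (fun S : {set 'I_N} => S \subset J)) /= [X in _ + X]big1 ?addr0; last first.
    by move=> S /andP[_ nSJ]; rewrite ev_q (negbTE nSJ) !mulr0.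
  apply: eq_big => [S|S /andP[SJ vS]]; first by rewrite andbC.
  by rewrite ev_q SJ (negbTE (contra (subsetP JD lastI) lastD)) subr0 !mulr1.
move=> S vS; have := @sub_sum0 _ _ D phi Hphi S.
rewrite /phi vS; apply.
by move: vS; rewrite /validS sub_initE => /andP[].
Qed.


Notation Xt := {ffun 'I_N -> bool}.
Notation VT := {ffun Xt -> ('F_p)^o}.
Notation Idx := ('I_m + ({set 'I_N} + {set 'I_N}))%type.

Definition vf (i : Idx) : VT :=
  match i with
  | inl j => [ffun x : Xt => f_fun p N L (A j) x]
  | inr (inl S0) => [ffun x : Xt => q_fun p N S0 x]
  | inr (inr I1) => [ffun x : Xt => gI_fun p N K I1 x]
  end.

Definition Pidx (i : Idx) : bool :=
  match i with
  | inl _ => true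
  | inr (inl S0) => validS S0
  | inr (inr I1) => validI I1
  end.

Lemma f_ext (X : {set 'I_N}) (x y : 'I_N -> bool) : x =1 y -> f_fun p N L X x = f_fun p N L X y.
Proof.
move=> E; rewrite /f_fun /v_dot; apply: eq_bigr => l _; congr (_ - _).
by apply: eq_bigr => i _; rewrite E.
Qed.

Lemma q_ext (S : {set 'I_N}) (x y : 'I_N -> bool) : x =1 y -> q_fun p N S x = q_fun p N S y.
Proof.
move=> E; rewrite /q_fun /x_last /x_mon; congr (_ * _); last by apply: eq_bigr => i _; rewrite E.
by congr (_ - _); apply: eq_bigr => i _; rewrite E.
Qed.

Lemma g_ext (I : {set 'I_N}) (x y : 'I_N -> bool) : x =1 y -> gI_fun p N K I x = gI_fun p N K I y.
Proof.
move=> E; rewrite /gI_fun /g_fun /x_mon; congr (_ * _); last by apply: eq_bigr => i _; rewrite E.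
apply: eq_bigr => h _; congr (_ - _).
by apply: eq_bigr => i _; rewrite E.
Qed.

Lemma indep_vec (al : Idx -> 'F_p) :
  \sum_(i | Pidx i) al i *: vf i = 0 -> forall i, Pidx i -> al i = 0.
Proof.
move=> H.
pose a j := al (inl j); pose b S := al (inr (inl S)); pose c I := al (inr (inr I)).
have Hx : forall B, Sum3 a b c (pt B) = 0.
  move=> B; have := congr1 (fun u : VT => u (finfun (pt B))) H.
  rewrite /= sum_ffunE big_sumType /= big_sumType /= ffunE => <-.
  rewrite /Sum3 -addrA; congr (_ + (_ + _)).
  - by apply: eq_bigr => j _; rewrite scaleFE ffunE; congr (_ * _); apply: f_ext => i; rewrite ffunE.
  - by apply: eq_bigr => S _; rewrite scaleFE ffunE; congr (_ * _); apply: q_ext => i; rewrite ffunE.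
  - by apply: eq_bigr => I _; rewrite scaleFE ffunE; congr (_ * _); apply: g_ext => i; rewrite ffunE.
case=> [j _|[S0|I1] /= v].
- exact: (@all_a a b c Hx j).
- exact: (@all_b a b c Hx S0 v).
- exact: (@all_c a b c Hx I1 v).
Qed.


Lemma vf_in (i : Idx) : Pidx i -> vf i \in Vd 'F_p N (size L).
Proof.
case: i => [j _|[S0|I1] /= v].
- have -> : vf (inl j) = [ffun x : Xt => \prod_(l <- L) (1 * \sum_(i | i \in A j) ((x i) : nat)%:R + - l%:R)].
    by apply/ffunP => x; rewrite !ffunE /f_fun /v_dot; apply: eq_bigr => l _; rewrite mul1r.
  by apply: prod_in => l; apply: lin_in.
- have -> : [ffun x : Xt => q_fun p N S0 x] = fmul [ffun x : Xt => (-1) * \sum_(i : 'I_N | (i.+1 == N)%N) ((x i) : nat)%:R + 1] (mon _ S0).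
    by apply/ffunP => x; rewrite !ffunE /q_fun /x_last /x_mon mulN1r addrC.
  apply: (subvP (@Vd_mono _ _ _ _ (_ : (1 + #|S0| <= size L)%N))).
    by move: v => /andP[_]; rewrite add1n.
  by apply: mul_in; [apply: lin_in | apply: mon_in].
- have -> : [ffun x : Xt => gI_fun p N K I1 x] = fmul [ffun x : Xt => \prod_(h <- KuKm1 K) (1 * \sum_(i : 'I_N | (i.+1 < N)%N) ((x i) : nat)%:R + - h%:~R)] (mon _ I1).
    apply/ffunP => x; rewrite !ffunE /gI_fun /g_fun /x_mon; congr (_ * _).
    by apply: eq_bigr => h _; rewrite mul1r.
  have szK : (size (KuKm1 K) <= 2 * size K)%N.
    by rewrite /KuKm1 (leq_trans (size_undup _)) // size_cat !size_map addnn -mul2n.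
  apply: (subvP (@Vd_mono _ _ _ _ (_ : (size (KuKm1 K) + #|I1| <= size L)%N))).
    by move: v => /andP[_]; lia.
  by apply: mul_in; [apply: prod_in => h; apply: lin_in | apply: mon_in].
Qed.


Lemma bound_main : (m <= \sum_((size L).+1 - 2 * size K <= t < (size L).+1) 'C(N.-1, t))%N.
Proof.
have H := @indep_card 'F_p _ Idx Pidx vf (Vd 'F_p N (size L)) vf_in indep_vec.
have H2 := leq_trans H (Vd_dim _ _ _).
have cP : #|Pidx| = (m + (#|validS| + #|validI|))%N.
  rewrite -sum1_card big_sumType /= big_sumType /=.
  rewrite !sum1_card card_ord; congr (_ + (_ + _))%N; apply: eq_card => x; by rewrite !inE.
have cS : #|validS| = (\sum_(t < size L) 'C(n, t))%N.
  transitivity #|[pred S0 : {set 'I_N} | (S0 \subset D) && (#|S0| < size L)%N]|;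
    last by rewrite count_le cardD.
  by apply: eq_card => S0; rewrite !inE unfold_in /= sub_initE.
have cI : #|validI| = (\sum_(t < (size L).+1 - 2 * size K) 'C(n, t))%N.
  transitivity #|[pred S0 : {set 'I_N} | (S0 \subset D) && (#|S0| < (size L).+1 - 2 * size K)%N]|;
    last by rewrite count_le cardD.
  apply: eq_card => S0; rewrite !inE unfold_in /= sub_initE.
  by case: (_ \subset _) => //=; apply/idP/idP; lia.
have cT : #|[pred A0 : {set 'I_N} | (#|A0| <= size L)%N]| = (\sum_(t < (size L).+1) 'C(N, t))%N.
  transitivity #|[pred S0 : {set 'I_N} | (S0 \subset setT) && (#|S0| < (size L).+1)%N]|;
    last by rewrite count_le cardsT card_ord.
  by apply: eq_card => S0; rewrite !inE subsetT.
rewrite cP cS cI cT binsum_split in H2.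
have E : \sum_(t < (size L).+1) 'C(n, t) = (\sum_(t < (size L).+1 - 2 * size K) 'C(n, t)
   + \sum_((size L).+1 - 2 * size K <= t < (size L).+1) 'C(n, t))%N.
  rewrite -(big_mkord xpredT (fun t => 'C(n, t))) -(big_mkord xpredT (fun t => 'C(n, t))).
  by rewrite (@big_cat_nat _ _ _ ((size L).+1 - 2 * size K) 0 (size L).+1 _ _ (leq0n _) (leq_subr _ _)).
rewrite E in H2; rewrite /=; lia.
Qed.

End Main.

Local Open Scope ring_scope.

Theorem mainTheorem7 (p n m : nat) (K L : seq nat) (A : 'I_m -> {set 'I_n}) :
  prime p ->
  sorted ltn K -> all (fun k => k < p)%N K ->
  uniq L -> all (fun l => l < p)%N L ->
  ~~ has (fun l => l \in K) L ->
  injective A ->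
  (forall i, (#|A i| %% p)%N \in K) ->
  (forall i j, i != j -> (#|A i :&: A j| %% p)%N \in L) ->
  (size L + last 0%N K <= n)%N ->
  ((n < p + head 0%N K)%N \/ ((size L)%:Z + 1 - 2 * (size K)%:Z + (last 0%N K)%:Z
                               < (p + head 0%N K)%:Z - 1)%R) ->
  (forall (a : 'I_m -> 'F_p) (b c : {set 'I_n} -> 'F_p),
   (forall x : 'I_n -> bool,
      \sum_(j < m) a j * f_fun p n L (A j) x
    + \sum_(S : {set 'I_n} | sub_init n S && (#|S|.+1 <= size L)%N) b S * q_fun p n S x
    + \sum_(I : {set 'I_n} | sub_init n I && (#|I| + 2 * size K <= size L)%N)
          c I * gI_fun p n K I x = 0) ->
   [/\ forall j, a j = 0,
       forall S, sub_init n S -> (#|S|.+1 <= size L)%N -> b S = 0 &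
       forall I, sub_init n I -> (#|I| + 2 * size K <= size L)%N -> c I = 0])
  /\ (m <= \sum_((size L).+1 - 2 * size K <= t < (size L).+1) 'C(n.-1, t))%N.
Proof.
move=> pp Ks Kp uL Lp KL Ainj HK HL Hn Hc.
case: n A Ainj HK HL Hn Hc => [|n] A Ainj HK HL Hn Hc; last first.
  split; last exact: (@bound_main _ _ _ _ _ _ pp Ks Kp Lp KL HK HL Hn Hc).
  move=> a b c Hx.
  have HB : forall B, Sum3 p n m K L A a b c (pt B) = 0 by move=> B; exact: Hx.
  split.
  - exact: (@all_a _ _ _ _ _ _ pp Ks Kp Lp KL HK HL _ _ _ HB).
  - by move=> S0 h1 h2; apply: (@all_b _ _ _ _ _ _ pp Ks Kp Lp KL HK HL Hn Hc _ _ _ HB); rewrite /validS h1 h2.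
  - by move=> I1 h1 h2; apply: (@all_c _ _ _ _ _ _ pp Ks Kp Lp KL HK HL Hn Hc _ _ _ HB); rewrite /validI h1 h2.
have L0 : size L = 0%N by lia.
have allset0 : forall S0 : {set 'I_0}, S0 = set0 by move=> S0; apply/setP => [[]].
have m1 : (m <= 1)%N.
  move: Ainj; clear -allset0; case: m A => [|[|m']] // A Ainj.
  have := Ainj ord0 (lift ord0 ord0).
  rewrite (allset0 (A ord0)) (allset0 (A (lift _ _))) => /(_ erefl) /eqP.
  by rewrite (negbTE (neq_lift _ _)).
have Kn : K = [::] -> m = 0%N.
  move=> K0; case: m A HK {Ainj HL m1} => // m' A HK.
  by have := HK ord0; rewrite K0.
set x0 : 'I_0 -> bool := fun _ => false.
split.
  move=> a b c Hx; have := Hx x0.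
  rewrite [X in _ + X + _]big1 ?addr0; last by move=> S0 /andP[_]; rewrite L0.
  case E : K => [|k0 K'].
    have m0 := Kn E; rewrite E in Hx *.
    rewrite big1 ?add0r; last by move=> j; exfalso; have := ltn_ord j; lia.
    rewrite (bigD1 set0) /=; last by rewrite L0 cards0 andbT; apply/forall_inP => i; rewrite in_set0.
    rewrite big1 ?addr0; last by move=> I1 /andP[_]; rewrite (allset0 I1) eqxx.
    rewrite /gI_fun /g_fun /KuKm1 /= big_nil mul1r /x_mon big_set0 mulr1 => c0.
    split.
    - by move=> j; exfalso; have := ltn_ord j; lia.
    - by move=> S0 _; rewrite L0.
    - by move=> I1 _ _; rewrite (allset0 I1).
  rewrite [X in _ + X]big1 ?addr0; last by move=> I1 /andP[_]; rewrite L0 /=; lia.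
  have sL : L = [::] by apply/eqP; rewrite -size_eq0 L0.
  move=> Ha; split; last 2 first.
  - by move=> S0 _; rewrite L0.
  - by move=> I1 _; rewrite L0 /=; lia.
  move=> j; move: Ha; rewrite (bigD1 j) //= big1 ?addr0.
    by rewrite /f_fun sL big_nil mulr1.
  move=> k kj; exfalso; move: kj; apply/negP; rewrite negbK -val_eqE.
  rewrite /=; have := ltn_ord k; have := ltn_ord j; lia.
case E : K => [|k1 K'].
  by rewrite (Kn E).
rewrite L0 /= big_nat1 bin0; exact: m1.
Qed.
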